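(* Let $1\le d<n$ be integers and $A\subseteq\mathbb{F}_2^n$. For a uniformly random $d$-flat $F$ in $\mathbb{F}_2^n$, \[\Pr\big[|A\cap F|\text{ is odd}\big]\le \frac12+\frac{1}{2(2^{n-d+1}-1)}.\]
   Context: A $d$-flat in $\mathbb{F}_2^n$ is a set $x_0+U$ with $x_0\in\mathbb{F}_2^n$ and $U$ a $d$-dimensional linear subspace of $\mathbb{F}_2^n$; ''uniformly random $d$-flat'' means uniform over the set of all such distinct sets. *)

(* Defs.v *)
From HB Require Import structures.
From mathcomp Require Import all_boot all_order all_algebra.
Unset Printing Implicit Defensive.
Import Order.TTheory GRing.Theory Num.Theory.

Notation F2n n := 'rV['F_2]_n.

(* S is a d-flat: S = x0 + U where U is the row space of a d x n matrix of
   rank d, i.e. a d-dimensional linear subspace of F_2^n. *)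
Definition is_flat (n d : nat) (S : {set F2n n}) : bool :=
  [exists x0 : F2n n, exists B : 'M['F_2]_(d, n),
     (\rank B == d) && (S == [set (x0 + u)%R | u in [pred v : F2n n | (v <= B)%MS]])].

Definition flats (n d : nat) : {set {set F2n n}} := [set S | is_flat n d S].

Definition prob_odd (n d : nat) (A : {set F2n n}) : rat :=
  (#|[set S in flats n d | odd #|A :&: S|]|%:R / #|flats n d|%:R)%R.

(* Main.v *)
Require Import Defs.
From mathcomp Require Import all_boot all_order all_algebra.
From mathcomp Require Import zify ring lra.
Import Order.TTheory GRing.Theory Num.Theory.

Local Open Scope ring_scope.

Lemma F2_cases (k : 'F_2) : k = 0 \/ k = 1.
Proof. case: k => -[|[|//]] H; [left|right]; exact: val_inj. Qed.

Lemma sub_addr m n (B : 'M['F_2]_(m, n)) (w u : 'rV['F_2]_n) :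
  (u <= B)%MS -> ((w + u)%R <= B)%MS = (w <= B)%MS.
Proof.
move=> Hu; apply/idP/idP => H; last exact: addmx_sub H Hu.
have : ((w + u + - u)%R <= B)%MS by apply: addmx_sub => //; rewrite eqmx_opp.
by rewrite addrK.
Qed.

Definition phi n d (x0 : 'rV['F_2]_n) (B : 'M['F_2]_(d, n)) : {set 'rV['F_2]_n} :=
  [set (x0 + u)%R | u in [pred v : 'rV['F_2]_n | (v <= B)%MS]].

Arguments phi {n d}.

Lemma in_phi n d (x0 : 'rV['F_2]_n) (B : 'M['F_2]_(d, n)) (y : 'rV['F_2]_n) : (y \in phi x0 B) = ((y - x0)%R <= B)%MS.
Proof.
apply/imsetP/idP => [[u Hu ->]|H]; first by rewrite (addrC x0) addrK.
by exists (y - x0); rewrite // addrC subrK.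
Qed.

Lemma card_subsp r n (W : 'M['F_2]_(r, n)) : \rank W = r ->
  #|[set v : 'rV_n | (v <= W)%MS]| = (2 ^ r)%N.
Proof.
move=> rW.
have -> : [set v : 'rV_n | (v <= W)%MS] = [set (u *m W) | u in [pred u : 'rV_r | true]].
  apply/setP => v; rewrite inE; apply/submxP/imsetP => [[D ->]|[u _ ->]]; eauto.
rewrite card_imset; last by apply: row_free_inj; rewrite /row_free rW.
by rewrite cardT -cardE card_mx card_Fp // mul1n.
Qed.

Lemma rank_colmx d n (v : 'rV['F_2]_n) (W : 'M['F_2]_(d, n)) :
  (\rank (col_mx v W) == d.+1) = (\rank W == d) && ~~ (v <= W)%MS.
Proof.
have E : \rank (col_mx v W) = \rank (v + W)%MS by rewrite addsmxE.
rewrite E; have := mxrank_sum_cap v W.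
case: (boolP (v <= W)%MS) => vW /=.
  have -> : \rank (v + W)%MS = \rank W.
    by apply: eqmx_rank; rewrite addsmx_sub vW submx_refl addsmxSr.
  move=> _; rewrite andbF; apply/negbTE; by rewrite neq_ltn ltnS rank_leq_row.
have vn0 : v != 0 by apply: contraNneq vW => ->; rewrite sub0mx.
have c0 : \rank (v :&: W)%MS = 0%N.
  have := mxrank_leqif_sup (capmxSl v W).
  rewrite rank_rV vn0 => -[]; case: (\rank _) => [//|[|//]] _.
  by move/esym; rewrite sub_capmx (negbTE vW) andbF.
rewrite c0 rank_rV vn0 addn0 add1n => ->; by rewrite eqSS andbT.
Qed.
Arguments sub_addr {m n B} w {u}.
Arguments in_phi {n d}.
Arguments card_subsp {r n W}.

Local Open Scope ring_scope.

Lemma phi_split d n (x0 v : 'rV['F_2]_n) (W : 'M['F_2]_(d,n)) : ~~ (v <= W)%MS ->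
  phi x0 (col_mx v W) = phi x0 W :|: phi (x0 + v) W /\
  phi x0 W :&: phi (x0 + v) W = set0.
Proof.
move=> vW; split.
  apply/setP => y; rewrite inE !in_phi -addsmxE; apply/idP/orP.
    move/sub_addsmxP => [[a b] /= E].
    rewrite [a]mx11_scalar mul_scalar_mx in E.
    case: (F2_cases (a 0 0)) => h; rewrite h in E.
      by left; rewrite E scale0r add0r submxMl.
    right; rewrite opprD addrA E scale1r addrAC subrr add0r submxMl.
    done.
  case=> H; first exact: submx_trans H (addsmxSr v W).
  have -> : (y - x0 = (y - (x0 + v)) + v)%R by rewrite opprD addrA subrK.
  apply: addmx_sub; first exact: submx_trans H (addsmxSr v W).
  exact: addsmxSl.
apply/setP => y; rewrite !inE !in_phi; apply/negbTE/negP => /andP [H1 H2].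
move: H2; rewrite opprD addrA addrC sub_addr // eqmx_opp.
by apply/negP.
Qed.

Lemma fiber n d (x0 : 'rV['F_2]_n) (B0 : 'M['F_2]_(d,n)) : \rank B0 = d ->
  #|[set t : 'rV['F_2]_n * 'M['F_2]_(d,n) | (\rank t.2 == d) && (phi t.1 t.2 == phi x0 B0)]|
  = (2 ^ d * #|[pred P : 'M['F_2]_d | P \in unitmx]|)%N.
Proof.
move=> rB0.
have -> : [set t : 'rV['F_2]_n * 'M['F_2]_(d,n) | (\rank t.2 == d) && (phi t.1 t.2 == phi x0 B0)]
   = setX [set x | ((x - x0)%R <= B0)%MS] [set B : 'M['F_2]_(d,n) | (B == B0)%MS].
  apply/setP => -[x B]; rewrite !inE /=.
  apply/andP/andP => [[_ /eqP E]|[H1 H2]].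
    have hx : ((x - x0)%R <= B0)%MS.
      have : x \in phi x B by rewrite in_phi subrr sub0mx.
      by rewrite E in_phi.
    have hx' : ((x0 - x)%R <= B)%MS.
      have : x0 \in phi x0 B0 by rewrite in_phi subrr sub0mx.
      by rewrite -E in_phi.
    split => //; apply/andP; split; apply/row_subP => i.
      have : (x + row i B) \in phi x B by rewrite in_phi (addrC x) addrK row_sub.
      by rewrite E in_phi addrAC addrC sub_addr.
    have : (x0 + row i B0) \in phi x0 B0 by rewrite in_phi (addrC x0) addrK row_sub.
    by rewrite -E in_phi addrAC addrC sub_addr.
  split; first by rewrite (eqmx_rank H2) rB0.
  apply/eqP/setP => y; rewrite !in_phi.
  have -> : (y - x0 = (y - x) + (x - x0))%R by rewrite addrA subrK.
  by rewrite (sub_addr _ H1) (eqmxP H2).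
rewrite cardsX.
have -> : [set x | ((x - x0)%R <= B0)%MS] = phi x0 B0.
  by apply/setP => y; rewrite inE in_phi.
rewrite /phi card_imset; last exact: addrI.
have -> : #|[pred v : 'rV['F_2]_n | (v <= B0)%MS]| = (2 ^ d)%N.
  by rewrite -(card_subsp rB0); apply: eq_card => v; rewrite !inE.
congr (_ * _)%N.
have -> : [set B : 'M['F_2]_(d,n) | (B == B0)%MS]
   = [set (P *m B0) | P in [pred P : 'M['F_2]_d | P \in unitmx]].
  apply/setP => B; rewrite inE; apply/idP/imsetP => [H|[P HP ->]].
    have sB : (B <= B0)%MS by case/andP: H.
    exists (B *m pinvmx B0); last by rewrite mulmxKpV.
    rewrite inE -row_full_unit /row_full eqn_leq rank_leq_col /= -{1}rB0 -(eqmx_rank H).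
    by apply: leq_trans (mxrankM_maxl _ B0); rewrite mulmxKpV.
  by apply/eqmxP; apply: eqmxMfull; rewrite row_full_unit.
rewrite card_imset //; apply: row_free_inj; by rewrite /row_free rB0.
Qed.

Lemma count_fib (T U : finType) (D : {set T}) (f : T -> U) (c : nat) (P : pred U) :
  (forall t, t \in D -> #|[set s in D | f s == f t]| = c) ->
  #|[set t in D | P (f t)]| = (c * #|[set S in f @: D | P S]|)%N.
Proof.
move=> Hc.
rewrite -!sum1_card.
rewrite (partition_big f (fun S => S \in [set S in f @: D | P S])); last first.
  by move=> t; rewrite !inE => /andP [tD Pt]; rewrite Pt andbT imset_f.
rewrite big_distrr /=; apply: eq_bigr => S; rewrite !inE => /andP [/imsetP [t tD ->] Pt].
rewrite muln1 -(Hc t tD) -sum1_card; apply: eq_bigl => s; rewrite !inE.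
case: (s \in D) => //=; case: eqP => [->|]; by rewrite ?Pt ?andbF.
Qed.
Arguments phi_split {d n}.
Arguments fiber {n d}.
Arguments count_fib {T U D f c} P.

Local Close Scope ring_scope.

Lemma card_sumb (T : finType) (P : pred T) : #|[set t | P t]| = \sum_t (P t : nat).
Proof.
rewrite -sum1_card big_mkcond /=; apply: eq_bigr => t _; rewrite inE; by case: (P t).
Qed.

Lemma pair_bound (T : finType) (h : T -> bool) :
  2 * \sum_x \sum_y (h x != h y : nat) <= #|T| * #|T|.
Proof.
set a := #|[set y | h y]|; set b := #|[set y | ~~ h y]|.
have E x : \sum_y (h x != h y : nat) = if h x then b else a.
  rewrite -card_sumb /a /b; case: (h x); apply: eq_card => y; rewrite !inE;
  by case: (h y).
rewrite (eq_bigr _ (fun x _ => E x)) (bigID h) /=.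
rewrite (eq_bigr (fun _ => b)); last by move=> x ->.
rewrite [X in _ + X](eq_bigr (fun _ => a)); last by move=> x /negbTE ->.
rewrite !sum_nat_cond_const -/a -/b.
have : a + b = #|T|.
  rewrite -(cardC [set y | h y]) /b; congr (_ + _); apply: eq_card => y.
  by rewrite !inE.
move=> <-. clear E; clearbody a b. case: (nat_AGM2 a b) => H _; move: H; rewrite expnS expn1; nia.
Qed.

Lemma sum_split_mx (d n : nat) (G : 'M['F_2]_(1 + d, n) -> nat) :
  \sum_(B : 'M['F_2]_(1 + d, n)) G B =
  \sum_(v : 'rV['F_2]_n) \sum_(W : 'M['F_2]_(d, n)) G (col_mx v W).
Proof.
rewrite pair_bigA /=.
rewrite (reindex (fun p : 'rV['F_2]_n * 'M['F_2]_(d, n) => col_mx p.1 p.2)) //.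
exists (fun B => (usubmx B, dsubmx B)) => [[v W] _|B _] /=.
  by rewrite col_mxKu col_mxKd.
by rewrite vsubmxK.
Qed.

Local Close Scope ring_scope.

Lemma tot_count n d' :
  #|[set t : 'rV['F_2]_n * 'M['F_2]_(1 + d', n) | \rank t.2 == d'.+1]|
  = #|'rV['F_2]_n| * (#|[set W : 'M['F_2]_(d', n) | \rank W == d']| * (#|'rV['F_2]_n| - 2 ^ d')).
Proof.
rewrite card_sumb.
have -> : \sum_(t : 'rV['F_2]_n * 'M['F_2]_(1 + d', n)) ((\rank t.2 == d'.+1) : nat)
   = \sum_(x : 'rV['F_2]_n) \sum_(B : 'M['F_2]_(1 + d', n)) ((\rank B == d'.+1) : nat).
  by rewrite pair_bigA.
rewrite sum_nat_const cardT -cardE; congr (_ * _).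
rewrite sum_split_mx exchange_big card_sumb big_distrl /=.
apply: eq_bigr => W _.
under eq_bigr do rewrite rank_colmx.
case rW: (\rank W == d') => /=; last by rewrite mul0n big1.
rewrite mul1n -card_sumb.
have := cardsC [set v : 'rV['F_2]_n | (v <= W)%MS].
rewrite (card_subsp (eqP rW)) => <-.
rewrite addKn; apply: eq_card => v; by rewrite !inE.
Qed.

Lemma odd_bound n d' (A : {set 'rV['F_2]_n}) :
  2 * #|[set t : 'rV['F_2]_n * 'M['F_2]_(1 + d', n) |
          (\rank t.2 == d'.+1) && odd #|A :&: phi t.1 t.2|]|
  <= #|[set W : 'M['F_2]_(d', n) | \rank W == d']| * (#|'rV['F_2]_n| * #|'rV['F_2]_n|).
Proof.
rewrite card_sumb.
have -> : \sum_(t : 'rV['F_2]_n * 'M['F_2]_(1 + d', n))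
     (((\rank t.2 == d'.+1) && odd #|A :&: phi t.1 t.2|) : nat)
   = \sum_(x : 'rV['F_2]_n) \sum_(B : 'M['F_2]_(1 + d', n))
     (((\rank B == d'.+1) && odd #|A :&: phi x B|) : nat).
  by rewrite pair_bigA.
set g := fun (W : 'M['F_2]_(d', n)) y => odd #|A :&: phi y W|.
have step : \sum_(x : 'rV['F_2]_n) \sum_(B : 'M['F_2]_(1 + d', n))
     (((\rank B == d'.+1) && odd #|A :&: phi x B|) : nat)
   <= \sum_(x : 'rV['F_2]_n) \sum_(v : 'rV['F_2]_n) \sum_(W : 'M['F_2]_(d', n))
     ((\rank W == d') * (g W x != g W (x + v)%R)).
  apply: leq_sum => x _; rewrite sum_split_mx.
  apply: leq_sum => v _; apply: leq_sum => W _.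
  rewrite rank_colmx; case: (boolP (v <= W)%MS) => vW; first by rewrite andbF.
  case: (\rank W == d') => //=; rewrite mul1n.
  have [E1 E2] := phi_split x v W vW.
  rewrite E1 setIUr.
  have := cardsUI (A :&: phi x W) (A :&: phi (x + v)%R W).
  rewrite setIACA setIid E2 setI0 cards0 addn0 => ->.
  by rewrite oddD /g; case: (odd _); case: (odd _).
apply: leq_trans (leq_mul (leqnn 2) step) _.
have -> : \sum_(x : 'rV['F_2]_n) \sum_(v : 'rV['F_2]_n) \sum_(W : 'M['F_2]_(d', n))
     ((\rank W == d') * (g W x != g W (x + v)%R))
   = \sum_(W : 'M['F_2]_(d', n)) (\rank W == d') *
       \sum_(x : 'rV['F_2]_n) \sum_(y : 'rV['F_2]_n) (g W x != g W y).
  rewrite (eq_bigr (fun x => \sum_(W : 'M['F_2]_(d', n)) \sum_(v : 'rV['F_2]_n)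
          ((\rank W == d') * (g W x != g W (x + v)%R)))); last first.
    by move=> x _; rewrite exchange_big.
  rewrite exchange_big; apply: eq_bigr => W _; rewrite big_distrr; apply: eq_bigr => x _.
  by rewrite big_distrr /= [RHS](reindex_inj (addrI x)).
rewrite big_distrr card_sumb big_distrl /=; apply: leq_sum => W _.
rewrite mulnCA; apply: leq_mul => //; exact: pair_bound.
Qed.

Local Open Scope ring_scope.

Lemma flats_eq n d : flats n d =
  [set phi t.1 t.2 | t in [set t : 'rV['F_2]_n * 'M['F_2]_(d, n) | \rank t.2 == d]].
Proof.
apply/setP => S; rewrite inE /is_flat; apply/existsP/imsetP.
  move=> [x0 /existsP [B /andP [rB /eqP ->]]].
  by exists (x0, B); rewrite ?inE.
move=> [[x0 B]]; rewrite inE /= => rB ->.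
by exists x0; apply/existsP; exists B; rewrite rB eqxx.
Qed.

Theorem lemma4p1 (n d : nat) (A : {set 'rV['F_2]_n}) :
  (1 <= d)%N -> (d < n)%N ->
  prob_odd n d A <= 1 / 2 + 1 / (2 * (2 ^+ (n - d + 1) - 1)).
Proof.
case: d => [//|d'] _ Hd.
set D := [set t : 'rV['F_2]_n * 'M['F_2]_(d'.+1, n) | \rank t.2 == d'.+1].
set f := fun t : 'rV['F_2]_n * 'M['F_2]_(d'.+1, n) => phi t.1 t.2.
set c := (2 ^ d'.+1 * #|[pred P : 'M['F_2]_d'.+1 | P \in unitmx]|)%N.
have Hfib : forall t, t \in D -> #|[set s in D | f s == f t]| = c.
  move=> [x0 B0]; rewrite inE /= => rB0.
  rewrite /c -(fiber x0 B0 (eqP rB0)); apply: eq_card => s; by rewrite !inE.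
have cpos : (0 < c)%N.
  rewrite /c muln_gt0 expn_gt0 /=; apply/card_gt0P; exists 1%:M; exact: unitmx1.
have Hodd := count_fib (fun S => odd #|A :&: S|) Hfib.
have Hall := count_fib xpredT Hfib.
rewrite /prob_odd flats_eq -/D.
set o := #|[set S in [set f x | x in D] | odd #|A :&: S|]|.
have -> : #|[set phi t.1 t.2 | t in D]| = #|[set S in f @: D | xpredT S]|.
  by apply: eq_card => S; rewrite !inE andbT.
set t := #|[set S in f @: D | xpredT S]|.
have ot : (o <= t)%N.
  by apply: subset_leq_card; apply/subsetP => S; rewrite !inE => /andP [-> _].
set M := #|'rV['F_2]_n|.
set K := #|[set W : 'M['F_2]_(d', n) | \rank W == d']|.
have HM : M = (2 ^ n)%N.
  by rewrite /M card_mx card_ord mul1n.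

have tot : (c * t = M * (K * (M - 2 ^ d')))%N.
  rewrite -Hall -(tot_count n d'); apply: eq_card => s; by rewrite !inE andbT.
have ob : (2 * (c * o) <= K * (M * M))%N.
  rewrite -Hodd; have := odd_bound n d' A.
  have -> : #|[set t0 in D | odd #|A :&: f t0|]| =
    #|[set t : 'rV['F_2]_n * 'M['F_2]_(1 + d', n) |
          (\rank t.2 == d'.+1) && odd #|A :&: phi t.1 t.2|]|.
    by apply: eq_card => s; rewrite !inE.
  done.
set w := (2 ^ d')%N.
set N := (2 ^ (n - d'))%N.
have HMN : M = (N * w)%N by rewrite HM /N /w -expnD subnK //; lia.
have Nge2 : (2 <= N)%N.
  rewrite /N (_ : n - d' = (n - d').-1.+1)%N; last by lia.
  by rewrite expnS leq_pmulr // expn_gt0.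
have wpos : (0 < w)%N by rewrite expn_gt0.
have key : (2 * o * (N - 1) <= t * N)%N.
  have Mw : (M - w = (N - 1) * w)%N by rewrite HMN mulnBl mul1n.
  have h1 : (c * (2 * o * (M - w)) <= c * (t * M))%N.
    move: ob; rewrite -/w; set z := (M - w)%N => ob.
    have : (2 * (c * o) * z <= K * (M * M) * z)%N by apply: leq_mul.
    rewrite -/z in tot; nia.
  move: h1; rewrite leq_pmul2l // Mw HMN => h1.
  rewrite -(leq_pmul2l wpos); nia.
rewrite (_ : (n - d'.+1 + 1 = n - d')%N); last by lia.
have -> : (2 : rat) ^+ (n - d') = N%:R by rewrite /N natrX.
have Npos : (1 < N%:R :> rat) by rewrite ltr1n.
have -> : 1 / 2 + 1 / (2 * (N%:R - 1)) = N%:R / (2 * (N%:R - 1)) :> rat.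
  by field; rewrite subr_eq0 gt_eqF.
case: (posnP t) => [t0|tpos].
  rewrite t0 invr0 mulr0; apply: divr_ge0; first by rewrite ler0n.
  by apply: mulr_ge0 => //; lra.
rewrite ler_pdivrMr ?ltr0n // mulrAC ler_pdivlMr; last by apply: mulr_gt0 => //; lra.
have : ((2 * o * (N - 1))%:R <= (t * N)%:R :> rat) by rewrite ler_nat.
rewrite !natrM natrB; last by lia.
move=> h; nra.
Qed.
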